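(* Let $s\ge1$, $m_1,n_1>0$, and $1<n_2<m_2$. Let $n(x)=n_1(x+n_2)^N$ and $m(x)=m_1(x+m_2)^M$. If $M>\frac{N+1+s}{2}$, $0<N<1$ and $$m_2^{1-N}>\frac{m_1n_1+Mm_1^2n_1+n_1^2}{m_1^2},$$ then $$(1+n'(x))m^2(x)-(1+m'(x))m(x)n(x)-(x+1)^s n^2(x)>0\quad\text{for all }x\ge0.$$ *)

(* Defs.v *)
From Stdlib Require Import Reals.
From Coquelicot Require Import Coquelicot.
Open Scope R_scope.

Definition nfun (n1 n2 N : R) (x : R) : R := n1 * Rpower (x + n2) N.
Definition mfun (m1 m2 M : R) (x : R) : R := m1 * Rpower (x + m2) M.

(* Main.v *)
Require Import Defs.
From Stdlib Require Import Reals Lra.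
From Coquelicot Require Import Coquelicot.
Open Scope R_scope.

Lemma der_pow (c d e x : R) : 0 < x + d ->
  Derive (fun t => c * Rpower (t + d) e) x = c * (e * Rpower (x + d) (e - 1)).
Proof.
  intro H. apply is_derive_unique.
  apply is_derive_scal.
  assert (D : is_derive (fun y => Rpower y e) (x + d) (e * Rpower (x + d) (e - 1))).
  { apply is_derive_Reals. now apply derivable_pt_lim_power. }
  assert (G : is_derive (fun t => t + d) x 1).
  { auto_derive; auto; ring. }
  pose proof (is_derive_comp (fun y => Rpower y e) (fun t => t + d) x _ _ D G) as K.
  simpl in K. unfold scal in K; simpl in K. unfold mult in K; simpl in K.
  now rewrite Rmult_1_l in K.
Qed.

Lemma Rpow_lt1 (b y : R) : 1 < b -> y < 0 -> Rpower b y < 1.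
Proof. intros. rewrite <- (Rpower_O b) by lra. now apply Rpower_lt. Qed.

Lemma Rpow_pos (b y : R) : 0 < Rpower b y.
Proof. unfold Rpower. apply exp_pos. Qed.

Theorem lemma4p1 (s m1 n1 m2 n2 M N : R) :
  1 <= s -> 0 < m1 -> 0 < n1 -> 1 < n2 -> n2 < m2 ->
  M > (N + 1 + s) / 2 -> 0 < N -> N < 1 ->
  Rpower m2 (1 - N) > (m1 * n1 + M * m1 ^ 2 * n1 + n1 ^ 2) / m1 ^ 2 ->
  forall x : R, 0 <= x ->
    (1 + Derive (nfun n1 n2 N) x) * (mfun m1 m2 M x) ^ 2
    - (1 + Derive (mfun m1 m2 M) x) * mfun m1 m2 M x * nfun n1 n2 N x
    - Rpower (x + 1) s * (nfun n1 n2 N x) ^ 2 > 0.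
Proof.
  intros Hs Hm1 Hn1 Hn2 Hm2 HM HN0 HN1 Hk x Hx.
  unfold nfun, mfun.
  rewrite (der_pow n1 n2 N x) by lra.
  rewrite (der_pow m1 m2 M x) by lra.
  set (a := x + n2) in *. set (b := x + m2) in *.
  assert (Ha : 1 < a) by (unfold a; lra).
  assert (Hab : a < b) by (unfold a, b; lra).
  assert (Hb : 1 < b) by lra.
  set (P := Rpower b (2*M - 1 + N)).
  assert (HP : 0 < P) by apply Rpow_pos.
  assert (E1 : Rpower b M ^ 2 = Rpower b (1 - N) * P).
  { unfold P. rewrite <- Rpower_plus. simpl. rewrite Rmult_1_r, <- Rpower_plus.
    f_equal. ring. }
  assert (E2 : Rpower b M * Rpower b N = Rpower b (1 - M) * P).
  { unfold P. rewrite <- !Rpower_plus. f_equal. ring. }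
  assert (E3 : Rpower b (M - 1) * Rpower b M * Rpower b N = P).
  { unfold P. rewrite <- !Rpower_plus. f_equal. ring. }
  assert (E4 : Rpower b s * Rpower b N ^ 2 = Rpower b (s + N + 1 - 2*M) * P).
  { unfold P. simpl. rewrite Rmult_1_r, <- !Rpower_plus. f_equal. ring. }
  assert (Lan : Rpower a N <= Rpower b N) by (apply Rle_Rpower_l; lra).
  assert (Lc : Rpower (x+1) s <= Rpower b s) by (apply Rle_Rpower_l; unfold b; lra).
  assert (L1 : Rpower b (1 - M) < 1) by (apply Rpow_lt1; lra).
  assert (L2 : Rpower b (s + N + 1 - 2*M) < 1) by (apply Rpow_lt1; lra).
  assert (L3 : Rpower m2 (1 - N) <= Rpower b (1 - N)) by (apply Rle_Rpower_l; unfold b; lra).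
  assert (Hk2 : m1^2 * Rpower m2 (1 - N) > m1 * n1 + M * m1 ^ 2 * n1 + n1 ^ 2).
  { assert (0 < m1^2) by nra.
    set (X := m1 * n1 + M * m1 ^ 2 * n1 + n1 ^ 2) in *.
    assert (X = (X / m1^2) * m1^2) by (field; lra). nra. }
  assert (Hnp : 0 <= n1 * (N * Rpower a (N - 1))).
  { pose proof (Rpow_pos a (N-1)). apply Rmult_le_pos; [lra|]. apply Rmult_le_pos; lra. }
  pose proof (Rpow_pos a N) as PaN. pose proof (Rpow_pos b M) as PbM.
  pose proof (Rpow_pos b N) as PbN. pose proof (Rpow_pos b (M-1)) as PbM1.
  pose proof (Rpow_pos (x+1) s) as Pc. pose proof (Rpow_pos b (1-M)).
  pose proof (Rpow_pos b (s + N + 1 - 2*M)).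
  assert (M > 0) by lra.
  assert (B1 : m1 * Rpower b M * (n1 * Rpower a N) <= m1 * n1 * Rpower b (1 - M) * P).
  { replace (m1 * n1 * Rpower b (1 - M) * P) with ((m1 * n1 * Rpower b M) * Rpower b N)
      by (pose proof (f_equal (Rmult (m1*n1)) E2); lra).
    replace (m1 * Rpower b M * (n1 * Rpower a N)) with ((m1 * n1 * Rpower b M) * Rpower a N) by ring.
    apply Rmult_le_compat_l; [|lra]. apply Rmult_le_pos; [|lra]. apply Rmult_le_pos; lra. }
  assert (B2 : m1 * (M * Rpower b (M - 1)) * (m1 * Rpower b M) * (n1 * Rpower a N) <= m1^2 * M * n1 * P).
  { rewrite <- E3.
    replace (m1 * (M * Rpower b (M - 1)) * (m1 * Rpower b M) * (n1 * Rpower a N)) with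
      ((m1^2 * M * n1 * Rpower b (M-1) * Rpower b M) * Rpower a N) by ring.
    replace (m1 ^ 2 * M * n1 * (Rpower b (M - 1) * Rpower b M * Rpower b N)) with
      ((m1^2 * M * n1 * Rpower b (M-1) * Rpower b M) * Rpower b N) by ring.
    apply Rmult_le_compat_l; [|lra].
    assert (0 < m1^2) by nra.
    repeat apply Rmult_le_pos; lra. }
  assert (B3 : Rpower (x + 1) s * (n1 * Rpower a N) ^ 2 <= n1^2 * Rpower b (s + N + 1 - 2*M) * P).
  { rewrite Rmult_assoc, <- E4.
    assert (Rpower (x+1) s * Rpower a N ^ 2 <= Rpower b s * Rpower b N ^ 2).
    { assert (Rpower a N ^2 <= Rpower b N^2) by (apply pow_incr; lra).
      apply Rmult_le_compat; try lra. apply pow_le; lra. }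
    replace (Rpower (x + 1) s * (n1 * Rpower a N) ^ 2) with (n1^2 * (Rpower (x + 1) s * Rpower a N ^ 2)) by ring.
    apply Rmult_le_compat_l; nra. }
  assert (Key : m1 * n1 * Rpower b (1 - M) + m1^2 * M * n1 + n1^2 * Rpower b (s + N + 1 - 2*M)
                < m1^2 * Rpower b (1 - N)).
  { assert (m1 * n1 * Rpower b (1 - M) < m1 * n1) by (assert (0 < m1*n1) by nra; nra).
    assert (n1^2 * Rpower b (s + N + 1 - 2*M) < n1^2) by (assert (0 < n1^2) by nra; nra).
    assert (0 < m1^2) by nra. nra. }
  replace ((m1 * Rpower b M) ^ 2) with (m1^2 * (Rpower b M ^2)) by ring.
  rewrite E1.
  assert (0 <= n1 * (N * Rpower a (N - 1)) * (m1 ^ 2 * (Rpower b (1 - N) * P))).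
  { apply Rmult_le_pos; auto. assert (0 < m1^2) by nra. pose proof (Rpow_pos b (1-N)). 
    apply Rmult_le_pos; [lra|]. apply Rmult_le_pos; lra. }
  apply Rmult_lt_compat_r with (r := P) in Key; [|lra].
  nra.
Qed.
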